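(* Let $n_0$ be a positive integer and let $X,Y$ be complex linear spaces. A mapping $f:X\to Y$ satisfies $$f(2\mu x+\mu y)+f(\mu x+2\mu y)=\mu[f(3x)+f(3y)]$$ for all $x,y\in X$ and all $\mu\in\mathbb{T}^1_{n_0}$ if and only if $f$ is $\mathbb{C}$-linear.
   Context: $\mathbb{T}^1_{n_0}:=\{e^{i\theta}: 0\le\theta\le 2\pi/n_0\}$. *)

(* Defs.v *)
From HB Require Import structures.
From mathcomp Require Import all_boot all_order all_algebra.
From mathcomp Require Import reals trigo.
From mathcomp Require Import complex.
Set Implicit Arguments. Unset Strict Implicit. Unset Printing Implicit Defensive.
Import Order.TTheory GRing.Theory Num.Theory.
Local Open Scope ring_scope.

Definition expi (R : realType) (theta : R) : R[i] := Complex (cos theta) (sin theta).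

Definition inT1 (R : realType) (n0 : nat) (mu : R[i]) : Prop :=
  exists theta : R, [/\ 0 <= theta, theta <= 2 * pi / n0%:R & mu = expi theta].

(* Main.v *)
Require Import Defs.
From HB Require Import structures.
From mathcomp Require Import all_boot all_order all_algebra.
From mathcomp Require Import reals trigo complex.
From mathcomp Require Import ring lra.
Import Order.TTheory GRing.Theory Num.Theory.
Local Open Scope ring_scope.

Section Homog.
Variables (R : realType) (X Y : lmodType R[i]) (f : X -> Y).
Hypothesis fadd : forall u v, f (u + v) = f u + f v.

Definition Sh (a : R[i]) := forall x : X, f (a *: x) = a *: f x.

Lemma f0 : f 0 = 0.
Proof. have h := fadd 0 0; rewrite addr0 in h; apply: (addrI (f 0)); by rewrite addr0 -h. Qed.

Lemma fN u : f (- u) = - f u.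
Proof. by apply/eqP; rewrite -subr_eq0 opprK -fadd addNr f0. Qed.

Lemma fB u v : f (u - v) = f u - f v.
Proof. by rewrite fadd fN. Qed.

Lemma Sh1 : Sh 1. Proof. by move=> x; rewrite !scale1r. Qed.
Lemma ShD a b : Sh a -> Sh b -> Sh (a + b).
Proof. by move=> ha hb x; rewrite !scalerDl fadd ha hb. Qed.
Lemma ShN a : Sh a -> Sh (- a).
Proof. by move=> ha x; rewrite !scaleNr fN ha. Qed.
Lemma ShB a b : Sh a -> Sh b -> Sh (a - b).
Proof. by move=> ha hb; apply: ShD => //; apply: ShN. Qed.
Lemma ShM a b : Sh a -> Sh b -> Sh (a * b).
Proof. by move=> ha hb x; rewrite -!scalerA ha hb. Qed.
Lemma ShV a : Sh a -> Sh a^-1.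
Proof.
move=> ha x; have [->|a0] := eqVneq a 0; first by rewrite invr0 !scale0r f0.
by rewrite -{2}[x](scalerKV a0) ha scalerK.
Qed.
Lemma Shnat n : Sh n%:R.
Proof. elim: n => [|n IH]; first by move=> x; rewrite !scale0r f0.
by rewrite -addn1 natrD; apply: ShD => //; apply: Sh1. Qed.
Lemma ShDiv a b : Sh a -> Sh b -> Sh (a / b).
Proof. by move=> ha hb; apply: ShM => //; apply: ShV. Qed.

Lemma Sh_all_lin : (forall a, Sh a) -> linear f.
Proof. by move=> h a u v; rewrite fadd h. Qed.
End Homog.
Lemma zcomb (V : zmodType) (A B C P Q D G Z1 Z0 : V) :
  A + B = C + P -> C + A = Q + B -> A + D = G + Z1 -> G + A = Z0 + D ->
  Z1 = P + Q - Z0.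
Proof.
move=> e1 e2 e3 e4.
have eP : P = A + B - C by rewrite e1 [C + P]addrC addrK.
have eQ : Q = C + A - B by rewrite e2 addrK.
have eZ1 : Z1 = A + D - G by rewrite e3 [G + Z1]addrC addrK.
have eZ0 : Z0 = G + A - D by rewrite e4 addrK.
suff h : Z1 + Z0 = P + Q by rewrite -h addrK.
rewrite eZ1 eZ0 eP eQ.
rewrite [in LHS]addrA [in LHS](addrA _ G) subrK addrAC addrK.
by rewrite [in RHS]addrA [in RHS](addrA _ C) subrK addrAC addrK.
Qed.

Section Add.
Variables (R : realType) (X Y : lmodType R[i]) (f : X -> Y).
Hypothesis H : forall x y : X, f (2 *: x + y) + f (x + 2 *: y) = f (3 *: x) + f (3 *: y).
Hypothesis hf0 : f 0 = 0.

Definition L (a c : X) (s t : R[i]) := s *: a + t *: c.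

Lemma combL a c al be s t s' t' :
  al *: L a c s t + be *: L a c s' t' = L a c (al * s + be * s') (al * t + be * t').
Proof. by rewrite /L !scalerDr !scalerA !scalerDl addrACA. Qed.

Lemma Egen a c s t s' t' p1 q1 p2 q2 p3 q3 p4 q4 :
  2 * s + s' = p1 -> 2 * t + t' = q1 -> s + 2 * s' = p2 -> t + 2 * t' = q2 ->
  3 * s = p3 -> 3 * t = q3 -> 3 * s' = p4 -> 3 * t' = q4 ->
  f (L a c p1 q1) + f (L a c p2 q2) = f (L a c p3 q3) + f (L a c p4 q4).
Proof.
move=> <- <- <- <- <- <- <- <-.
have := H (L a c s t) (L a c s' t').
have e1 : 2 *: L a c s t + L a c s' t' = L a c (2 * s + s') (2 * t + t').
  by rewrite -[L a c s' t']scale1r combL !mul1r.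
have e2 : L a c s t + 2 *: L a c s' t' = L a c (s + 2 * s') (t + 2 * t').
  by rewrite -[L a c s t]scale1r combL !mul1r.
have e3 : forall k u v, k *: L a c u v = L a c (k * u) (k * v).
  by move=> k u v; rewrite /L scalerDr !scalerA.
by rewrite e1 e2 !e3.
Qed.

Lemma fadd_gen x y : f (x + y) = f x + f y.
Proof.
have e1 := @Egen x y (1/12) (1/4) (1/3) 0 (1/2) (1/2) (3/4) (1/4) (1/4) (3/4) 1 0.
have e2 := @Egen x y 0 (1/3) (1/4) (1/12) (1/4) (3/4) (1/2) (1/2) 0 1 (3/4) (1/4).
have e3 := @Egen x y (1/12) (1/12) (1/3) (1/3) (1/2) (1/2) (3/4) (3/4) (1/4) (1/4) 1 1.
have e4 := @Egen x y 0 0 (1/4) (1/4) (1/4) (1/4) (1/2) (1/2) 0 0 (3/4) (3/4).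
have := @zcomb _ _ _ _ _ _ _ _ _ _ (e1 _ _ _ _ _ _ _ _) (e2 _ _ _ _ _ _ _ _) (e3 _ _ _ _ _ _ _ _) (e4 _ _ _ _ _ _ _ _).
rewrite /L !scale0r !scale1r !addr0 add0r hf0 subr0 => ->; first by rewrite add0r.
all: by field.
Qed.
End Add.

Section Main.
Local Open Scope complex_scope.
Variables (R : realType) (n0 : nat) (hn0 : (0 < n0)%N) (X Y : lmodType R[i]) (f : X -> Y).
Hypothesis Hyp : forall (x y : X) (mu : R[i]), inT1 n0 mu ->
     f ((2 * mu) *: x + mu *: y) + f (mu *: x + (2 * mu) *: y)
     = mu *: (f (3 *: x) + f (3 *: y)).

Let al : R := pi / 2 / n0%:R.
Let n0pos : 0 < (n0%:R : R). Proof. by rewrite ltr0n. Qed.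
Let al_gt0 : 0 < al. Proof. by rewrite /al !divr_gt0 // pi_gt0. Qed.
Let al_le : al <= pi / 2.
Proof.
rewrite /al ler_pdivrMr // ler_peMr ?ler1n //.
by rewrite divr_ge0 // pi_ge0.
Qed.
Let al_ltpi : al < pi.
Proof. have := pi_gt0 R; have := al_le; lra. Qed.
Let al_le2 : al <= 2 * pi / n0%:R.
Proof. rewrite /al ler_pM2r ?invr_gt0 //; have := pi_gt0 R; lra. Qed.

Lemma inT1_arc th : 0 <= th -> th <= al -> inT1 n0 (expi th).
Proof. move=> h1 h2; exists th; split => //; exact: le_trans h2 al_le2. Qed.

Lemma expi0 : expi (0 : R) = 1.
Proof. by rewrite /expi cos0 sin0. Qed.

Lemma H1 x y : f (2 *: x + y) + f (x + 2 *: y) = f (3 *: x) + f (3 *: y).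
Proof.
have := Hyp x y _ (@inT1_arc 0 (lexx 0) (ltW al_gt0)).
by rewrite expi0 mulr1 !scale1r.
Qed.

Lemma mu0_neq1 : expi al != 1.
Proof.
apply/negP => /eqP /(congr1 (@complex.Im R)) /= h.
have := sin_gt0_pi (R:=R) (x:=al); rewrite al_gt0 al_ltpi h /= ltxx.
by move=> /(_ isT).
Qed.

Lemma hf0 : f 0 = 0.
Proof.
have := Hyp 0 0 _ (@inT1_arc al (ltW al_gt0) (lexx _)).
rewrite !scaler0 !addr0 => h.
have : (1 - expi al) *: (f 0 + f 0) = 0 by rewrite scalerBl scale1r -h subrr.
move/eqP; rewrite scaler_eq0 subr_eq0 eq_sym (negbTE mu0_neq1) /= -mulr2n -scaler_nat.
by rewrite scaler_eq0 pnatr_eq0 /= => /eqP.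
Qed.

Lemma fadd u v : f (u + v) = f u + f v.
Proof. exact: (@fadd_gen _ _ _ f H1 hf0). Qed.

Let S := @Sh R X Y f.
Let SD a b : S a -> S b -> S (a + b). Proof. exact: (@ShD _ _ _ f fadd). Qed.
Let SB a b : S a -> S b -> S (a - b). Proof. exact: (@ShB _ _ _ f fadd). Qed.
Let SM a b : S a -> S b -> S (a * b). Proof. exact: (@ShM _ _ _ f). Qed.
Let SV a : S a -> S a^-1. Proof. exact: (@ShV _ _ _ f fadd). Qed.
Let SDiv a b : S a -> S b -> S (a / b). Proof. exact: (@ShDiv _ _ _ f fadd). Qed.
Let Sn n : S n%:R. Proof. exact: (@Shnat _ _ _ f fadd). Qed.
Let S1 : S 1. Proof. exact: (@Sh1 _ _ _ f). Qed.

Lemma S_arc mu : inT1 n0 mu -> S mu.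
Proof.
move=> hmu x.
have := Hyp x 0 mu hmu.
rewrite !scaler0 !addr0 hf0 addr0.
have -> : (2 * mu) *: x = 2%:R *: (mu *: x) by rewrite scalerA.
rewrite (Sn 3) (Sn 2) => h.
apply: (@scalerI _ _ (3%:R : R[i])); first by rewrite pnatr_eq0.
rewrite scalerA mulrC -scalerA -h.
by rewrite -[X in _ = _ + X]scale1r -scalerDl; congr (_ *: _); ring.
Qed.

Lemma cos_expi (th : R) : (cos th)%:C * (2 * expi th) = expi th ^+ 2 + 1.
Proof.
rewrite /expi (complexE (Complex (cos th) (sin th))) /=.
have hcs : (cos th)%:C ^+ 2 + (sin th)%:C ^+ 2 = 1.
  by rewrite -!rmorphXn -rmorphD cos2Dsin2 rmorph1.
have sq : forall j a b : R[i], (a + j * b) ^+ 2 = a ^+ 2 + j ^+ 2 * b ^+ 2 + 2 * a * j * b.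
  by move=> j a b; ring.
rewrite sq; move: hcs (@sqr_i R); move: (cos th)%:C (sin th)%:C ('i : R[i]) => a b j h hj.
apply/eqP; rewrite -subr_eq0; apply/eqP.
transitivity ((a ^+ 2 + b ^+ 2 - 1) - (1 + j ^+ 2) * b ^+ 2); first by ring.
by rewrite h hj; ring.
Qed.

Lemma S_cos th : 0 <= th -> th <= al -> S (cos th)%:C.
Proof.
move=> h1 h2.
have hS := @S_arc _ (@inT1_arc th h1 h2).
have nz : 2 * expi th != 0.
  apply/negP => /eqP h0; have := cos_expi th; rewrite h0 mulr0.
  have : expi th = 0 by move: h0 => /eqP; rewrite mulf_eq0 pnatr_eq0 /= => /eqP.
  move=> ->; rewrite expr0n /= add0r => /eqP; rewrite eq_sym oner_eq0.
  by [].
have -> : (cos th)%:C = (expi th ^+ 2 + 1) / (2 * expi th).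
  by rewrite -cos_expi mulfK.
apply: SDiv; last by apply: SM.
by apply: SD => //; rewrite expr2; apply: SM.
Qed.

Lemma S_int t : cos al <= t -> t <= 1 -> S t%:C.
Proof.
move=> h1 h2.
have ht : t \in `[-1, 1] by rewrite in_itv /= h2 andbT (le_trans (cos_geN1 _) h1).
rewrite -(acosK ht).
apply: S_cos; first exact: acos_ge0.
rewrite leNgt; apply/negP => hlt.
have hal : al \in `[0, pi] by rewrite in_itv /= (ltW al_gt0) (ltW al_ltpi).
have hth : acos t \in `[0, pi] by rewrite in_itv /= acos_ge0 // acos_lepi.
have := ltr_cos hal hth; rewrite hlt (acosK ht) => h.
by move: h1; rewrite leNgt h.
Qed.

Lemma cos_al_lt1 : cos al < 1.
Proof.
have h0 : (0:R) \in `[0, pi] by rewrite in_itv /= lexx pi_ge0.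
have hal : al \in `[0, pi] by rewrite in_itv /= (ltW al_gt0) (ltW al_ltpi).
by have := ltr_cos h0 hal; rewrite al_gt0 cos0.
Qed.

Lemma S_le1 r : r <= 1 -> S r%:C.
Proof.
move=> hr.
set c := cos al.
have hc : 0 < 1 - c by have := cos_al_lt1; rewrite /c; lra.
have hk : 0 <= (1 - r) / (1 - c) by rewrite divr_ge0 // ?(ltW hc) //; lra.
have := archi_boundP hk; set n := Num.Def.archi_bound _ => hn.
have npos : (0 : R) < n%:R by apply: le_lt_trans hn.
have hn' : 1 - r < n%:R * (1 - c) by rewrite -ltr_pdivrMr.
set t := 1 - (1 - r) / n%:R.
have ht1 : t <= 1 by rewrite /t gerBl; apply: divr_ge0; [lra | exact: ltW].
have ht2 : c <= t.
  have : (1 - r) / n%:R <= 1 - c by rewrite ler_pdivrMr // mulrC ltW.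
  rewrite /t; lra.
have St := @S_int t ht2 ht1.
have -> : r = 1 - n%:R * (1 - t).
  rewrite /t; field; by rewrite gt_eqF.
rewrite rmorphB rmorph1 rmorphM rmorphB rmorph1 rmorph_nat.
by apply: SB => //; apply: SM => //; apply: SB.
Qed.

Lemma S_real r : S r%:C.
Proof.
have [hr|hr] := lerP r 1; first exact: S_le1.
have -> : r = 2%:R - (2%:R - r) by ring.
rewrite rmorphB rmorph_nat; apply: SB => //; apply: S_le1; lra.
Qed.

Lemma S_i : S 'i.
Proof.
have hs : 0 < sin al by apply: sin_gt0_pi; rewrite al_gt0 al_ltpi.
have hS := @S_arc _ (@inT1_arc al (ltW al_gt0) (lexx _)).
have e : expi al = (cos al)%:C + 'i * (sin al)%:C.
  by rewrite /expi (complexE (Complex (cos al) (sin al))).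
have nz : (sin al)%:C != 0 by rewrite fmorph_eq0 gt_eqF.
have -> : 'i = (expi al - (cos al)%:C) / (sin al)%:C by rewrite e addrC addKr mulfK.
by apply: SDiv; [apply: SB => //; exact: S_real | exact: S_real].
Qed.

Lemma S_all a : S a.
Proof.
rewrite (complexE a); apply: SD; first exact: S_real.
by apply: SM; [exact: S_i | exact: S_real].
Qed.

Lemma main_dir : linear f.
Proof. by apply: (@Sh_all_lin _ _ _ f fadd) => a; apply: S_all. Qed.

End Main.

Theorem lemma2p9 (R : realType) (n0 : nat) (hn0 : (0 < n0)%N)
    (X Y : lmodType R[i]) (f : X -> Y) :
  (forall (x y : X) (mu : R[i]), inT1 n0 mu ->
     f ((2 * mu) *: x + mu *: y) + f (mu *: x + (2 * mu) *: y)
     = mu *: (f (3 *: x) + f (3 *: y)))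
  <-> linear f.
Proof.
split; first by move=> h; apply: (@main_dir R n0 hn0 X Y f h).
move=> lf.
have f0 : f 0 = 0.
  have h := lf 1 0 0; rewrite !scale1r addr0 in h.
  by apply: (addrI (f 0)); rewrite addr0 -h.
have fa u v : f (u + v) = f u + f v by rewrite -{1}[u]scale1r lf scale1r.
have fs a u : f (a *: u) = a *: f u by rewrite -[a *: u]addr0 lf f0 addr0.
move=> x y mu _.
rewrite !fa !fs scalerDr !scalerA addrACA -!scalerDl.
by congr (_ *: _ + _ *: _); ring.
Qed.
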